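(* Let $G$ be a group and $c\in G$. If the set $\{x\in G:x^2=c\}$ is $4$-large in $G$, then $G$ is abelian of exponent $2$, and $c=1$.
   Context: A subset $X\subseteq G$ is $k$-large in $G$ if the intersection of any $k$ left translates $g_1X\cap\dots\cap g_kX$ ($g_i\in G$) is non-empty. *)

(* Defs.v *)
From Stdlib Require Import Arith.

Definition is_group {G : Type} (mul : G -> G -> G) (one : G) (inv : G -> G) : Prop :=
  (forall x y z, mul x (mul y z) = mul (mul x y) z) /\
  (forall x, mul one x = x) /\ (forall x, mul x one = x) /\
  (forall x, mul (inv x) x = one) /\ (forall x, mul x (inv x) = one).

Definition in_left_translate {G : Type} (mul : G -> G -> G) (g : G) (X : G -> Prop) (x : G) : Prop :=
  exists y, X y /\ x = mul g y.

Definition k_large {G : Type} (mul : G -> G -> G) (k : nat) (X : G -> Prop) : Prop :=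
  forall g : nat -> G, exists x, forall i, i < k -> in_left_translate mul (g i) X x.

(* Main.v *)
Require Import Defs.
From Stdlib Require Import Arith Lia.

Section Grp.
Variables (G : Type) (mul : G -> G -> G) (one : G) (inv : G -> G).
Hypothesis hG : is_group mul one inv.

Lemma cancel_r x y z : mul x z = mul y z -> x = y.
Proof.
  destruct hG as (A & L & R & LI & RI). intro H.
  rewrite <- (R x), <- (R y), <- (RI z), !A, H. reflexivity.
Qed.

Lemma cancel_l x y z : mul z x = mul z y -> x = y.
Proof.
  destruct hG as (A & L & R & LI & RI). intro H.
  rewrite <- (L x), <- (L y), <- (LI z), <- !A, H. reflexivity.
Qed.

Lemma inv_inv a : inv (inv a) = a.
Proof.
  destruct hG as (A & L & R & LI & RI).
  apply (cancel_l _ _ (inv a)). rewrite RI, LI. reflexivity.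
Qed.

Lemma inv_mul a b : inv (mul a b) = mul (inv b) (inv a).
Proof.
  destruct hG as (A & L & R & LI & RI).
  apply (cancel_l _ _ (mul a b)). rewrite RI.
  rewrite <- A, (A b), RI, L, RI. reflexivity.
Qed.

Lemma key a x c : mul x x = c -> mul (mul a x) (mul a x) = c ->
  mul a x = mul x (inv a).
Proof.
  destruct hG as (A & L & R & LI & RI). intros H1 H2.
  rewrite <- H1 in H2. rewrite A in H2. apply cancel_r in H2.
  rewrite <- H2 at 2. rewrite <- !A, RI, R. reflexivity.
Qed.

Lemma fromtr g x c : (exists z, mul z z = c /\ x = mul g z) ->
  mul (mul (inv g) x) (mul (inv g) x) = c.
Proof.
  destruct hG as (A & L & R & LI & RI). intros [z [Hz ->]].
  assert (E : mul (inv g) (mul g z) = z) by (rewrite A, LI, L; reflexivity).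
  rewrite E. exact Hz.
Qed.
End Grp.

Theorem theorem4p1 (G : Type) (mul : G -> G -> G) (one : G) (inv : G -> G)
  (hG : is_group mul one inv) (c : G) :
  k_large mul 4 (fun x => mul x x = c) ->
  (forall x y, mul x y = mul y x) /\ (forall x, mul x x = one) /\ c = one.
Proof.
  intro HL.
  pose proof hG as (A & L & R & LI & RI).
  assert (Hx : forall a b, exists x, mul x x = c /\ mul a x = mul x (inv a) /\
     mul b x = mul x (inv b) /\ mul (mul a b) x = mul x (inv (mul a b))).
  { intros a b.
    destruct (HL (fun i => match i with 0 => one | 1 => inv a | 2 => inv b
                          | _ => inv (mul a b) end)) as [x Hx].
    pose proof (Hx 0 ltac:(lia)) as H0. pose proof (Hx 1 ltac:(lia)) as H1.
    pose proof (Hx 2 ltac:(lia)) as H2. pose proof (Hx 3 ltac:(lia)) as H3.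
    unfold in_left_translate in *; simpl in *.
    apply (fromtr _ _ _ _ hG) in H0, H1, H2, H3.
    rewrite (inv_inv _ _ _ _ hG) in H1, H2, H3.
    assert (E : inv one = one) by (rewrite <- (R (inv one)); apply LI).
    rewrite E, L in H0.
    exists x. repeat split; auto; eapply key; eauto. }
  assert (Hc : forall a b, mul (inv a) (inv b) = mul (inv b) (inv a)).
  { intros a b. destruct (Hx a b) as (x & H0 & Ha & Hb & Hab).
    rewrite (inv_mul _ _ _ _ hG) in Hab.
    rewrite <- A, Hb, A, Ha, <- A in Hab.
    eapply (cancel_l _ _ _ _ hG); eauto. }
  assert (Hcomm : forall x y, mul x y = mul y x).
  { intros a b. rewrite <- (inv_inv _ _ _ _ hG a), <- (inv_inv _ _ _ _ hG b). apply Hc. }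
  assert (Hsq : forall a, mul a a = one).
  { intro a. destruct (Hx a a) as (x & H0 & Ha & _).
    rewrite Hcomm in Ha. apply (cancel_l _ _ _ _ hG) in Ha. rewrite Ha at 2. apply RI. }
  repeat split; auto.
  destruct (Hx one one) as (x & H0 & _). rewrite <- H0. apply Hsq.
Qed.
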